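(* Let $f:[0,\infty)\to[0,\infty)$ be a continuous and non-decreasing function, and let $(x_N)_{N\in\mathbb{N}}$ be a sequence in $[0,1)$. Suppose there exist some $k\in\mathbb{N}$ and infinitely many $N\in\mathbb{N}$ such that the finite point set $x_1,\ldots,x_N$ has at most $k$ distinct gap lengths. Then $(x_N)_{N\in\mathbb{N}}$ does not have $f$-pair correlations; that is, it is not the case that \[ \lim_{N\to\infty}\frac{1}{N}\,\#\left\{1\le i\neq j\le N \;\middle|\; \|x_i-x_j\|\le \frac{s}{N}\right\} = f(s) \] holds for all $s\ge 0$.
   Context: Points of $[0,1)$ are regarded as points of the torus $\mathbb{T}^1=[0,1]/\sim$ (with $0$ and $1$ identified). For $x\in\mathbb{R}$, $\|x\|=\min\{|x-z| : z\in\mathbb{Z}\}$ denotes the distance to the nearest integer. For $s\ge 0$ and $N\in\mathbb{N}$, set $R(s,N)=\#\{1\le i\neq j\le N : \|x_i-x_j\|\le s/N\}$ (counting ordered pairs of distinct indices). A sequence has $f$-pair correlations if $\lim_{N\to\infty}\frac1N R(s,N)=f(s)$ for all $s\ge0$. The gap lengths of a finite point set $x_1,\ldots,x_N$ in $\mathbb{T}^1$ are the distances between neighboring elements on the circle: if $y_1\le y_2\le\cdots\le y_N$ is the nondecreasing rearrangement of $x_1,\ldots,x_N$ (repeated points allowed, so a gap length may be $0$), the gap lengths are the values $\|y_{i+1}-y_i\|$ for $1\le i\le N$, where $y_{N+1}:=y_1$. *)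

(* Defs.v *)
From Stdlib Require Import Reals Lra Lia List Permutation Sorting.Sorted.
From Coquelicot Require Import Coquelicot.
Open Scope R_scope.

(* ||x|| : distance from x to the nearest integer.  With n = floor x
   (Stdlib's Int_part), the nearest integers are n and n+1, so the distance
   is min (x - n) (n + 1 - x). *)
Definition dist_int (x : R) : R :=
  Rmin (x - IZR (Int_part x)) (IZR (Int_part x) + 1 - x).

(* R(s,N) = #{ (i,j) : 1 <= i, j <= N, i <> j, ||x_i - x_j|| <= s/N }
   (ordered pairs).  The sequence is x : nat -> R, indexed from 1. *)
Definition pair_count (x : nat -> R) (s : R) (N : nat) : nat :=
  length (filter
    (fun p : nat * nat =>
       if Nat.eq_dec (fst p) (snd p) then false
       else if Rle_dec (dist_int (x (fst p) - x (snd p))) (s / INR N)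
            then true else false)
    (list_prod (seq 1 N) (seq 1 N))).

Definition has_f_pair_correlations (f : R -> R) (x : nat -> R) : Prop :=
  forall s : R, 0 <= s ->
    is_lim_seq (fun N : nat => INR (pair_count x s N) / INR N) (f s).

(* Gap lengths of x_1,...,x_N given a nondecreasing rearrangement y
   (a list of length N): the values ||y_{i+1} - y_i||, i = 1..N, with
   y_{N+1} = y_1 (0-based: i < N, successor index (i+1) mod N). *)
Definition gap (y : list R) (i : nat) : R :=
  dist_int (nth ((i + 1) mod length y) y 0 - nth i y 0).

(* x_1,...,x_N has at most k distinct gap lengths: for the nondecreasing
   rearrangement y of x_1..x_N, all gap lengths lie in a list of at most
   k values.  (The nondecreasing rearrangement is unique, so the
   existential over y is harmless.) *)
Definition at_most_k_gap_lengths (x : nat -> R) (N k : nat) : Prop :=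
  exists y : list R,
    Permutation y (map x (seq 1 N)) /\ Sorted Rle y /\
    exists L : list R, (length L <= k)%nat /\
      forall i : nat, (i < N)%nat -> In (gap y i) L.

(* Main.v *)
Require Import Defs.
From Stdlib Require Import Reals List.
From Coquelicot Require Import Coquelicot.
From Stdlib Require Import Lra Lia Permutation Sorting.Sorted. From Stdlib Require Import ZArith.
Open Scope R_scope. Open Scope bool_scope.

Definition cnt {A} (p : A -> bool) (l : list A) : nat := length (filter p l).

Lemma cnt_app {A} (p : A -> bool) l1 l2 : cnt p (l1 ++ l2) = (cnt p l1 + cnt p l2)%nat.
Proof. unfold cnt. rewrite filter_app, length_app. reflexivity. Qed.

Lemma cnt_ext {A} (p q : A -> bool) l : (forall z, p z = q z) -> cnt p l = cnt q l.
Proof. intros H. unfold cnt. induction l as [|z l IH]; simpl; auto. rewrite H. destruct (q z); simpl; auto. Qed.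

Lemma cnt_split {A} (p q : A -> bool) l : (forall z, p z = true -> q z = true) ->
  cnt q l = (cnt p l + cnt (fun z => q z && negb (p z)) l)%nat.
Proof.
  intros H. unfold cnt. induction l as [|z l IH]; simpl; auto.
  pose proof (H z) as Hz. destruct (p z), (q z); simpl; rewrite ?IH; try lia.
Qed.

Lemma cnt_mono {A} (p q : A -> bool) l : (forall z, In z l -> p z = true -> q z = true) -> (cnt p l <= cnt q l)%nat.
Proof.
  unfold cnt. induction l as [|z l IH]; simpl; intros H; auto.
  assert (IH' := IH (fun w Hw => H w (or_intror Hw))).
  pose proof (H z (or_introl eq_refl)) as Hz. destruct (p z), (q z); simpl; try lia.
Qed.

Lemma cnt_or {A} (p q : A -> bool) l : (cnt (fun z => p z || q z) l <= cnt p l + cnt q l)%nat.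
Proof. unfold cnt. induction l as [|z l IH]; simpl; auto. destruct (p z), (q z); simpl; lia. Qed.

Lemma cnt_neg {A} (p : A -> bool) l : (cnt p l + cnt (fun z => negb (p z)) l)%nat = length l.
Proof. unfold cnt. induction l as [|z l IH]; simpl; auto. destruct (p z); simpl; lia. Qed.

Lemma cnt_false {A} (p : A -> bool) l : (forall z, p z = false) -> cnt p l = 0%nat.
Proof. unfold cnt. induction l as [|z l IH]; simpl; intros H; auto. rewrite H; auto. Qed.

Lemma cnt_ge {A} (p : A -> bool) (l S : list A) : NoDup S -> (forall z, In z S -> In z l /\ p z = true) -> (length S <= cnt p l)%nat.
Proof. intros HN HS. apply NoDup_incl_length; auto. intros z Hz. apply filter_In. apply HS; auto. Qed.

Lemma NoDup_prod {A B} (l : list A) (l' : list B) : NoDup l -> NoDup l' -> NoDup (list_prod l l').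
Proof.
  induction 1 as [|a l Ha Hl IH]; intros H'; simpl. constructor.
  apply NoDup_app; auto.
  - apply NoDup_map_NoDup_ForallPairs; auto. intros u v _ _ E. injection E; auto.
  - intros [u v] H1 H2. apply in_map_iff in H1. destruct H1 as [w [E _]]. injection E; intros; subst.
    apply in_prod_iff in H2. tauto.
Qed.

Lemma cnt_shift (p : nat -> bool) M K s : cnt (fun i => p (i + M)%nat) (seq s K) = cnt p (seq (s + M) K).
Proof.
  revert s. induction K; intros s; auto.
  change (seq s (S K)) with (s :: seq (S s) K). change (seq (s + M) (S K)) with ((s+M)%nat :: seq (S (s + M)) K).
  unfold cnt in *. simpl filter.
  destruct (p (s+M)%nat); simpl; rewrite IHK; replace (S s + M)%nat with (S (s + M)) by lia; auto.
Qed.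

Lemma cnt_seq_le (p : nat -> bool) s n m : (n <= m)%nat -> (cnt p (seq s n) <= cnt p (seq s m))%nat.
Proof. intros H. replace m with (n + (m - n))%nat by lia. rewrite seq_app, cnt_app. lia. Qed.

Lemma pigeon (T : list nat) (e : nat -> bool) (g : nat -> R) (L : list R) :
  (forall t, In t T -> e t = true -> In (g t) L) ->
  cnt e T = 0%nat \/ exists v, In v L /\
    (cnt e T <= length L * cnt (fun t => e t && (if Req_EM_T (g t) v then true else false)) T)%nat.
Proof.
  revert e. induction L as [|v L IH]; intros e H.
  - left. unfold cnt. destruct (filter e T) eqn:E; auto. exfalso.
    assert (Hn : In n (filter e T)) by (rewrite E; left; auto). apply filter_In in Hn. destruct Hn.
    apply (H n); auto.
  - set (ev := fun t => e t && (if Req_EM_T (g t) v then true else false)).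
    set (e' := fun t => e t && negb (if Req_EM_T (g t) v then true else false)).
    assert (Hs : cnt e T = (cnt ev T + cnt e' T)%nat).
    { rewrite (cnt_split ev e).
      - f_equal. apply cnt_ext. intros z. unfold ev, e'. destruct (e z); simpl; auto.
      - intros z. unfold ev. destruct (e z); auto. }
    destruct (IH e') as [H0|[w [Hw Hc]]].
    { intros t Ht He'. unfold e' in He'. apply andb_prop in He'. destruct He' as [He Hn].
      destruct (H t Ht He) as [E|E]; auto. destruct (Req_EM_T (g t) v); simpl in Hn; [discriminate|]. congruence. }
    + right; exists v. split; [left; auto|]. simpl length. rewrite Hs, H0. fold ev. nia.
    + set (ew := fun t => e t && (if Req_EM_T (g t) w then true else false)).
      assert (Hle : (cnt (fun t => e' t && (if Req_EM_T (g t) w then true else false)) T <= cnt ew T)%nat).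
      { apply cnt_mono. intros z _. unfold e', ew. destruct (e z), (Req_EM_T (g z) v), (Req_EM_T (g z) w); simpl; auto. }
      destruct (Nat.le_gt_cases (cnt ew T) (cnt ev T)).
      * right; exists v. split; [left; auto|]. simpl length. fold ev. nia.
      * right; exists w. split; [right; auto|]. simpl length. fold ew. nia.
Qed.

Lemma telescope (a : nat -> R) (p : nat -> bool) (v : R) n :
  (forall t, (t < n)%nat -> a t <= a (S t)) ->
  (forall t, (t < n)%nat -> p t = true -> v <= a (S t) - a t) ->
  INR (cnt p (seq 0 n)) * v <= a n - a 0%nat.
Proof.
  induction n; intros H1 H2. simpl. unfold cnt; simpl; lra.
  rewrite seq_S, cnt_app, plus_INR.
  assert (IH := IHn (fun t Ht => H1 t ltac:(lia)) (fun t Ht => H2 t ltac:(lia))).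
  unfold cnt at 2; simpl. specialize (H1 n ltac:(lia)). specialize (H2 n ltac:(lia)).
  destruct (p n); simpl.
  - specialize (H2 eq_refl). lra.
  - lra.
Qed.

Definition ediff (a : nat -> R) (t : nat) : bool := if Req_EM_T (a t) (a (S t)) then false else true.

Lemma bad_count a M K :
  (cnt (fun i => existsb (ediff a) (seq i M)) (seq 0 K) <= M * cnt (ediff a) (seq 0 (K + M - 1)))%nat.
Proof.
  induction M.
  - rewrite cnt_false; simpl; auto; lia.
  - rewrite (cnt_ext _ (fun i => existsb (ediff a) (seq i M) || ediff a (i + M)%nat)).
    2:{ intros z. rewrite seq_S, existsb_app. simpl. rewrite Bool.orb_false_r. reflexivity. }
    eapply Nat.le_trans; [apply cnt_or|].
    rewrite cnt_shift. simpl (0 + M)%nat.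
    assert (A1 : (cnt (ediff a) (seq 0 (K + M - 1)) <= cnt (ediff a) (seq 0 (K + S M - 1)))%nat)
      by (apply cnt_seq_le; lia).
    assert (A2 : (cnt (ediff a) (seq M K) <= cnt (ediff a) (seq 0 (K + S M - 1)))%nat).
    { replace (K + S M - 1)%nat with (M + K)%nat by lia. rewrite seq_app, cnt_app. simpl. lia. }
    nia.
Qed.

Lemma good_eq a M i : existsb (ediff a) (seq i M) = false -> forall r, (r <= M)%nat -> a (i + r)%nat = a i.
Proof.
  intros H r; induction r; intros Hr. rewrite Nat.add_0_r; auto.
  rewrite <- IHr by lia. replace (i + S r)%nat with (S (i + r)) by lia.
  assert (E : ediff a (i + r) = false).
  { destruct (ediff a (i+r)) eqn:E; auto. exfalso.
    assert (existsb (ediff a) (seq i M) = true); [|congruence].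
    apply existsb_exists; exists (i+r)%nat; split; auto. apply in_seq; lia. }
  unfold ediff in E. destruct (Req_EM_T (a (i + r)%nat) (a (S (i + r)))); congruence.
Qed.

Definition cntI (g : nat -> R) (G : R -> R -> bool) (n0 N : nat) : nat :=
  cnt (fun p : nat * nat => if Nat.eq_dec (fst p) (snd p) then false else G (g (fst p)) (g (snd p)))
      (list_prod (seq n0 N) (seq n0 N)).

Definition Q (s : R) (N : nat) (u v : R) : bool :=
  if Rle_dec (dist_int (u - v)) (s / INR N) then true else false.

Lemma pc_cntI x s N : pair_count x s N = cntI x (Q s N) 1 N.
Proof. reflexivity. Qed.

Lemma transfer (x a : nat -> R) (sigma : nat -> nat) N G :
  (forall i, (i < N)%nat -> (sigma i < N)%nat) ->
  (forall i j, (i < N)%nat -> (j < N)%nat -> sigma i = sigma j -> i = j) ->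
  (forall i, (i < N)%nat -> a i = x (S (sigma i))) ->
  (cntI a G 0 N <= cntI x G 1 N)%nat.
Proof.
  intros Hb Hi Ha. unfold cntI.
  eapply Nat.le_trans; [| apply cnt_ge with (S := map (fun p => (S (sigma (fst p)), S (sigma (snd p))))
     (filter (fun p : nat * nat => if Nat.eq_dec (fst p) (snd p) then false else G (a (fst p)) (a (snd p)))
        (list_prod (seq 0 N) (seq 0 N))))].
  - rewrite length_map. unfold cnt; lia.
  - apply NoDup_map_NoDup_ForallPairs. 2: apply NoDup_filter, NoDup_prod; apply seq_NoDup.
    intros [i j] [i' j'] H1 H2 Heq. apply filter_In in H1, H2.
    destruct H1 as [H1 _], H2 as [H2 _]. apply in_prod_iff in H1, H2. rewrite !in_seq in H1, H2.
    simpl in Heq. injection Heq; intros. f_equal; apply Hi; lia.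
  - intros z Hz. apply in_map_iff in Hz. destruct Hz as [[i j] [<- Hin]].
    apply filter_In in Hin. destruct Hin as [Hin Hp]. apply in_prod_iff in Hin. rewrite !in_seq in Hin.
    simpl in *. split.
    + apply in_prod_iff; rewrite !in_seq. pose proof (Hb i) as Hbi. pose proof (Hb j) as Hbj. split; lia.
    + destruct (Nat.eq_dec i j); [discriminate|].
      destruct (Nat.eq_dec (sigma i) (sigma j)).
      * exfalso; apply n; apply Hi; lia.
      * rewrite <- !Ha by lia. auto.
Qed.

Lemma jump_pairs (a : nat -> R) N (p : nat -> bool) G :
  (forall t, (t < N - 1)%nat -> p t = true -> G (a (S t)) (a t) = true) ->
  (cnt p (seq 0 (N - 1)) <= cntI a G 0 N)%nat.
Proof.
  intros H. unfold cntI.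
  eapply Nat.le_trans; [| apply cnt_ge with (S := map (fun t => (S t, t)) (filter p (seq 0 (N-1))))].
  - unfold cnt; rewrite length_map; lia.
  - apply NoDup_map_NoDup_ForallPairs. intros t t' _ _ E; injection E; auto. apply NoDup_filter, seq_NoDup.
  - intros z Hz. apply in_map_iff in Hz. destruct Hz as [t [<- Ht]]. apply filter_In in Ht.
    destruct Ht as [Ht Hp]. apply in_seq in Ht. split.
    + apply in_prod_iff; rewrite !in_seq; simpl; lia.
    + cbn [fst snd]. destruct (Nat.eq_dec (S t) t); [lia|]. apply H; auto; lia.
Qed.

Lemma window_pairs (a : nat -> R) N M G :
  (forall u, G u u = true) ->
  (M * cnt (fun i => negb (existsb (ediff a) (seq i M))) (seq 0 (N - M)) <= cntI a G 0 N)%nat.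
Proof.
  intros HG. unfold cntI.
  set (good := fun i => negb (existsb (ediff a) (seq i M))).
  eapply Nat.le_trans; [| apply cnt_ge with (S := map (fun pr => ((fst pr + snd pr)%nat, fst pr))
        (list_prod (filter good (seq 0 (N - M))) (seq 1 M)))].
  - rewrite length_map, length_prod, length_seq. unfold cnt. lia.
  - apply NoDup_map_NoDup_ForallPairs. 2: apply NoDup_prod; [apply NoDup_filter|]; apply seq_NoDup.
    intros [i r] [i' r'] _ _ E. simpl in E. injection E; intros. f_equal; lia.
  - intros z Hz. apply in_map_iff in Hz. destruct Hz as [[i r] [<- Hin]].
    apply in_prod_iff in Hin. destruct Hin as [Hi Hr]. apply filter_In in Hi. destruct Hi as [Hi Hg].
    apply in_seq in Hi, Hr. cbn [fst snd]. split.
    + apply in_prod_iff; rewrite !in_seq; lia.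
    + destruct (Nat.eq_dec (i + r) i); [lia|].
      unfold good in Hg. apply Bool.negb_true_iff in Hg.
      rewrite (good_eq a M i Hg r) by lia. apply HG.
Qed.

Lemma sorted_step (y : list R) : Sorted Rle y -> forall i, (S i < length y)%nat -> nth i y 0 <= nth (S i) y 0.
Proof.
  induction y as [|u y IH]; intros Hs i Hi; simpl in Hi. lia.
  destruct y as [|w y']. simpl in Hi; lia.
  inversion Hs; subst. destruct i.
  - simpl. inversion H2; auto.
  - change (nth i (w :: y') 0 <= nth (S i) (w :: y') 0). apply IH; auto. simpl; simpl in Hi; lia.
Qed.

Lemma Int_part_small d : 0 <= d < 1 -> Int_part d = 0%Z.
Proof.
  intros Hd. destruct (base_Int_part d) as [H1 H2].
  assert (A : IZR (Int_part d) < IZR 1) by lra. apply lt_IZR in A.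
  assert (B : IZR (-1) < IZR (Int_part d)) by lra. apply lt_IZR in B. lia.
Qed.

Lemma dist_int_small d : 0 <= d < 1 -> dist_int d = Rmin d (1 - d).
Proof. intros H. unfold dist_int. rewrite Int_part_small by auto. f_equal; simpl; lra. Qed.

Lemma Q_diag s N u : 0 <= s -> (0 < N)%nat -> Q s N u u = true.
Proof.
  intros Hs HN. unfold Q. replace (u - u) with 0 by ring. rewrite dist_int_small by lra.
  rewrite Rmin_left by lra. destruct (Rle_dec 0 (s / INR N)); auto. exfalso. apply n.
  apply Rdiv_le_0_compat; auto. apply lt_0_INR; auto.
Qed.

Lemma Q_mono s t N u v : s <= t -> (0 < N)%nat -> Q s N u v = true -> Q t N u v = true.
Proof.
  intros Hst HN. unfold Q. destruct (Rle_dec _ (s / INR N)); try discriminate.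
  destruct (Rle_dec _ (t / INR N)); auto. exfalso. apply n.
  eapply Rle_trans; [apply r|]. unfold Rdiv. apply Rmult_le_compat_r; auto.
  left. apply Rinv_0_lt_compat, lt_0_INR; auto.
Qed.

Lemma grid (s0 h : R) J : 0 < s0 -> 0 < h -> s0 <= INR J * h ->
  exists j, (j < J)%nat /\ INR j * h < s0 <= INR (S j) * h.
Proof.
  intros Hs Hh. induction J; intros HJ. simpl in HJ; lra.
  destruct (Rle_dec s0 (INR J * h)).
  - destruct (IHJ r) as [j [Hj Hj']]. exists j; split; auto.
  - exists J; split; auto. lra.
Qed.
Theorem theorem2 (f : R -> R) (x : nat -> R)
  (f_nonneg : forall s : R, 0 <= s -> 0 <= f s)
  (f_cont : forall s : R, 0 <= s -> forall eps : R, 0 < eps ->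
     exists delta : R, 0 < delta /\
       forall t : R, 0 <= t -> Rabs (t - s) < delta -> Rabs (f t - f s) < eps)
  (f_mono : forall s t : R, 0 <= s -> s <= t -> f s <= f t)
  (x_range : forall n : nat, 0 <= x n < 1)
  (gaps : exists k : nat, forall M : nat, exists N : nat,
     (M <= N)%nat /\ at_most_k_gap_lengths x N k) :
  ~ has_f_pair_correlations f x.
Proof.
  destruct gaps as [k Hk]. intros Hpc.
  set (K1 := S k).
  assert (Hf0 := f_nonneg 0 (Rle_refl 0)).
  assert (H0 : exists N0, forall N, (N0 <= N)%nat -> INR (pair_count x 0 N) / INR N < f 0 + 1).
  { pose proof (proj2 (is_lim_seq_spec _ _) (Hpc 0 (Rle_refl 0))) as L.
    destruct (L (mkposreal 1 Rlt_0_1)) as [N0 HN0]. exists N0. intros N HN.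
    specialize (HN0 N HN). simpl in HN0. apply Rabs_def2 in HN0. lra. }
  destruct H0 as [N0 HN0].
  destruct (archimed (4 * (f 0 + 1))) as [Hup _].
  set (M := Z.to_nat (up (4 * (f 0 + 1)))).
  assert (HM : 4 * (f 0 + 1) < INR M).
  { unfold M. rewrite INR_IZR_INZ, Z2Nat.id; [lra|]. apply le_IZR. simpl. lra. }
  assert (HMpos : 0 < INR M) by lra.
  assert (HK1 : 0 < INR K1) by (apply lt_0_INR; unfold K1; lia).
  set (eps := / (2 * INR M * INR K1)).
  set (B := 2 * INR M * INR K1).
  assert (HepsB : eps * B = 1) by (unfold eps, B; field; lra).
  assert (Heps : 0 < eps) by (unfold eps; apply Rinv_0_lt_compat; nra).
  assert (HB : 0 < B) by (unfold B; nra).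
  assert (Hg : forall x0, 0 <= x0 <= B + 1 -> continuity_pt (fun t => f (Rmax t 0)) x0).
  { intros x0 [Hx0 _] e He. destruct (f_cont x0 Hx0 e He) as [d [Hd Hd']]. exists d; split; auto.
    intros t [_ Ht]. simpl in *. unfold R_dist in *. rewrite (Rmax_left x0 0) by lra.
    apply Hd'. apply Rmax_r. apply Rabs_def2 in Ht. apply Rabs_def1; unfold Rmax; destruct (Rle_dec t 0); lra. }
  destruct (Heine _ _ (compact_P3 0 (B + 1)) Hg (mkposreal (eps/2) ltac:(lra))) as [dl Hdl].
  assert (Hdl0 : 0 < dl) by (destruct dl; simpl; auto).
  set (h := Rmin dl 1 / 2).
  assert (Hh : 0 < h /\ h <= 1/2 /\ h < dl) by (unfold h, Rmin; destruct Rle_dec; lra).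
  destruct Hh as [Hh [Hh1 Hh2]].
  set (J := Z.to_nat (up (B / h))).
  assert (HJ : B <= INR J * h).
  { destruct (archimed (B / h)) as [HJ _]. unfold J. rewrite INR_IZR_INZ, Z2Nat.id.
    - apply Rlt_le. apply (Rmult_lt_reg_r (/h)). apply Rinv_0_lt_compat; auto.
      rewrite Rmult_assoc, Rinv_r, Rmult_1_r by lra. unfold Rdiv in HJ. lra.
    - apply le_IZR. simpl. assert (0 <= B / h) by (apply Rdiv_le_0_compat; lra). lra. }
  assert (HLim : forall J0, exists N1, forall N, (N1 <= N)%nat -> forall j, (j <= J0)%nat ->
      Rabs (INR (pair_count x (INR j * h) N) / INR N - f (INR j * h)) < eps / 4).
  { induction J0.
    - pose proof (proj2 (is_lim_seq_spec _ _) (Hpc (INR 0 * h) ltac:(simpl; lra))) as L.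
      destruct (L (mkposreal (eps/4) ltac:(lra))) as [N1 HN1].
      exists N1. intros N HN j Hj. replace j with 0%nat by lia. apply HN1; auto.
    - destruct IHJ0 as [N1 HN1].
      pose proof (proj2 (is_lim_seq_spec _ _) (Hpc (INR (S J0) * h) ltac:(pose proof (pos_INR (S J0)); nra))) as L.
      destruct (L (mkposreal (eps/4) ltac:(lra))) as [N2 HN2].
      exists (Nat.max N1 N2). intros N HN j Hj. destruct (Nat.eq_dec j (S J0)).
      + subst. apply HN2; lia.
      + apply HN1; lia. }
  destruct (HLim (S J)) as [N1 HN1].
  destruct (Hk (Nat.max N0 (Nat.max N1 (4 * M + 1)))) as [N [HN Hgap]].
  destruct Hgap as [y [Hperm [Hsort [L [HLk HL]]]]].
  assert (HNM : (4 * M + 1 <= N)%nat) by lia.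
  assert (HNpos : (0 < N)%nat) by lia.
  assert (HNr : 0 < INR N) by (apply lt_0_INR; lia).
  assert (Hleny : length y = N) by (rewrite (Permutation_length Hperm), length_map, length_seq; auto).
  pose proof (proj1 (Permutation_nth _ _ 0) (Permutation_sym Hperm)) as HP.
  cbv zeta in HP. destruct HP as [_ [sigma [Hsb [Hsi Hsn]]]].
  rewrite length_map, length_seq in Hsb, Hsi, Hsn.
  set (a := fun i => nth i y 0).
  assert (Ha : forall i, (i < N)%nat -> a i = x (S (sigma i))).
  { intros i Hi. unfold a. rewrite Hsn by auto.
    rewrite (@nth_indep _ (map x (seq 1 N)) (sigma i) 0 (x 0%nat)) by (rewrite length_map, length_seq; apply Hsb; auto).
    rewrite map_nth, seq_nth by (apply Hsb; auto). reflexivity. }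
  assert (Hrange : forall i, (i < N)%nat -> 0 <= a i < 1) by (intros i Hi; rewrite Ha; auto).
  assert (Hstep : forall t, (S t < N)%nat -> a t <= a (S t)) by (intros t Ht; unfold a; apply sorted_step; auto; lia).
  set (g := fun t => dist_int (a (S t) - a t)).
  assert (Hgap : forall t, (t < N - 1)%nat -> In (g t) L).
  { intros t Ht. specialize (HL t ltac:(lia)). unfold gap in HL. rewrite Hleny in HL.
    rewrite Nat.mod_small in HL by lia. replace (t + 1)%nat with (S t) in HL by lia. exact HL. }
  assert (Hgform : forall t, (t < N - 1)%nat -> g t = Rmin (a (S t) - a t) (1 - (a (S t) - a t))).
  { intros t Ht. unfold g. apply dist_int_small.
    pose proof (Hrange t ltac:(lia)); pose proof (Hrange (S t) ltac:(lia)); pose proof (Hstep t ltac:(lia)). lra. }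
  set (e := ediff a).
  set (P := cnt e (seq 0 (N - 1))).
  set (gd := cnt (fun i => negb (existsb e (seq i M))) (seq 0 (N - M))).
  set (bd := cnt (fun i => existsb e (seq i M)) (seq 0 (N - M))).
  assert (E1 : (bd + gd)%nat = (N - M)%nat) by (unfold bd, gd; rewrite cnt_neg, length_seq; auto).
  assert (E2 : (bd <= M * P)%nat).
  { unfold bd, P. pose proof (bad_count a M (N - M)) as HH. replace (N - M + M - 1)%nat with (N - 1)%nat in HH by lia. exact HH. }
  assert (E3 : (M * gd <= pair_count x 0 N)%nat).
  { rewrite pc_cntI. eapply Nat.le_trans; [apply (window_pairs a N M (Q 0 N))|].
    - intros u; apply Q_diag; auto; lra.
    - apply (transfer x a sigma); auto. }
  assert (E4 : INR (pair_count x 0 N) < (f 0 + 1) * INR N).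
  { specialize (HN0 N ltac:(lia)). apply (Rmult_lt_compat_r (INR N)) in HN0; auto.
    unfold Rdiv in HN0. rewrite Rmult_assoc, Rinv_l, Rmult_1_r in HN0 by lra. lra. }
  assert (E5 : INR N / 2 < INR M * INR P).
  { assert (R1 : INR M * (INR N - INR M) <= INR (pair_count x 0 N) + INR M * (INR M * INR P)).
    { rewrite <- minus_INR by lia. rewrite <- !mult_INR, <- plus_INR. apply le_INR. nia. }
    assert (R2 : INR (4 * M + 1) <= INR N) by (apply le_INR; auto).
    rewrite plus_INR, mult_INR in R2. replace (INR 4) with 4 in R2 by (simpl; lra). simpl INR in R2.
    assert (R3 : (f 0 + 1) * INR N < INR M * INR N / 4) by nra.
    assert (R4 : INR M * (INR N / 2) < INR M * (INR M * INR P)) by nra.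
    apply Rmult_lt_reg_l in R4; auto. }
  destruct (pigeon (seq 0 (N - 1)) e g L) as [HP0 | [v [HvL Hv]]].
  { intros t Ht _. apply in_seq in Ht. apply Hgap; lia. }
  { exfalso. fold P in HP0. rewrite HP0 in E5. simpl in E5. lra. }
  set (pv := fun t => e t && (if Req_EM_T (g t) v then true else false)) in Hv.
  set (m := cnt pv (seq 0 (N - 1))) in Hv.
  fold P in Hv.
  assert (Hm1 : INR P <= INR K1 * INR m).
  { rewrite <- mult_INR. apply le_INR. unfold K1. eapply Nat.le_trans; [apply Hv|]. apply Nat.mul_le_mono_r. lia. }
  assert (HmN : INR N * eps < INR m).
  { apply (Rmult_lt_reg_r B); auto. replace (INR N * eps * B) with (INR N) by (rewrite Rmult_assoc, HepsB; ring).
    unfold B. nra. }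
  assert (Hvpos : 0 < v).
  { assert (Hm0 : (0 < m)%nat). { apply INR_lt. simpl. nra. }
    unfold m, cnt in Hm0. destruct (filter pv (seq 0 (N-1))) as [|t0 l0] eqn:Ef; simpl in Hm0; [lia|].
    assert (Ht0 : In t0 (filter pv (seq 0 (N-1)))) by (rewrite Ef; left; auto).
    apply filter_In in Ht0. destruct Ht0 as [Ht0 Hp0]. apply in_seq in Ht0.
    unfold pv in Hp0. apply andb_prop in Hp0. destruct Hp0 as [He0 Hg0].
    destruct (Req_EM_T (g t0) v) as [<-|]; [|discriminate].
    rewrite Hgform by lia. unfold e, ediff in He0. destruct (Req_EM_T (a t0) (a (S t0))); [discriminate|].
    pose proof (Hstep t0 ltac:(lia)). pose proof (Hrange t0 ltac:(lia)); pose proof (Hrange (S t0) ltac:(lia)).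
    unfold Rmin; destruct Rle_dec; lra. }
  assert (Htel : INR m * v <= a (N - 1)%nat - a 0%nat).
  { apply telescope.
    - intros t Ht. apply Hstep; lia.
    - intros t Ht Hpt. unfold pv in Hpt. apply andb_prop in Hpt. destruct Hpt as [_ Hg0].
      destruct (Req_EM_T (g t) v) as [<-|]; [|discriminate]. rewrite Hgform by lia. apply Rmin_l. }
  assert (Hmv : INR m * v < 1).
  { pose proof (Hrange (N-1)%nat ltac:(lia)); pose proof (Hrange 0%nat ltac:(lia)). lra. }
  set (s0 := INR N * v).
  assert (Hs0 : 0 < s0) by (unfold s0; nra).
  assert (Hs0B : s0 < B).
  { assert (s0 * eps < 1) by (unfold s0; nra).
    replace s0 with (s0 * eps * B) by (rewrite Rmult_assoc, HepsB; ring). nra. }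
  destruct (grid s0 h J Hs0 Hh ltac:(lra)) as [j [Hj [Hja Hjb]]].
  set (a0 := INR j * h) in *. set (b0 := INR (S j) * h) in *.
  assert (Hb0 : b0 = a0 + h) by (unfold a0, b0; rewrite S_INR; ring).
  assert (Ha0 : 0 <= a0) by (unfold a0; pose proof (pos_INR j); nra).
  assert (Hvb : v <= b0 / INR N).
  { replace v with (s0 / INR N) by (unfold s0; field; lra).
    unfold Rdiv; apply Rmult_le_compat_r; [left; apply Rinv_0_lt_compat; auto| lra]. }
  assert (Hva : ~ v <= a0 / INR N).
  { intros Hc. replace v with (s0 / INR N) in Hc by (unfold s0; field; lra).
    unfold Rdiv in Hc. apply Rmult_le_reg_r in Hc; [lra|]. apply Rinv_0_lt_compat; auto. }
  assert (Hjump : (pair_count x a0 N + m <= pair_count x b0 N)%nat).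
  { rewrite !pc_cntI. unfold cntI.
    rewrite (cnt_split (fun p => if Nat.eq_dec (fst p) (snd p) then false else Q a0 N (x (fst p)) (x (snd p)))
                       (fun p => if Nat.eq_dec (fst p) (snd p) then false else Q b0 N (x (fst p)) (x (snd p)))).
    2: { intros z. destruct (Nat.eq_dec (fst z) (snd z)); auto. apply Q_mono; auto; lra. }
    apply Nat.add_le_mono_l.
    apply (Nat.le_trans _ (cntI x (fun u w => Q b0 N u w && negb (Q a0 N u w)) 1 N)).
    2:{ apply Nat.eq_le_incl. unfold cntI. apply cnt_ext. intros z. destruct (Nat.eq_dec (fst z) (snd z)); auto. }
    eapply Nat.le_trans; [| apply (transfer x a sigma); auto].
    apply jump_pairs. intros t Ht Hpt. unfold pv in Hpt. apply andb_prop in Hpt. destruct Hpt as [_ Hg0].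
    destruct (Req_EM_T (g t) v) as [Hgt|]; [|discriminate]. unfold g in Hgt.
    unfold Q. rewrite Hgt. destruct (Rle_dec v (b0 / INR N)) as [|n1]; [|contradiction].
    destruct (Rle_dec v (a0 / INR N)); [contradiction|reflexivity]. }
  assert (HLa := HN1 N ltac:(lia) j ltac:(lia)). assert (HLb := HN1 N ltac:(lia) (S j) ltac:(lia)).
  fold a0 in HLa. fold b0 in HLb.
  assert (Hfab := Hdl a0 b0).
  cbv beta in Hfab. cbn [pos] in Hfab.
  rewrite !Rmax_left in Hfab by lra.
  assert (Hfab' : Rabs (f a0 - f b0) < eps / 2).
  { apply Hfab; try (split; lra).
    rewrite Hb0. replace (a0 - (a0 + h)) with (-h) by ring. rewrite Rabs_Ropp, Rabs_pos_eq by lra. lra. }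
  apply le_INR in Hjump. rewrite plus_INR in Hjump.
  apply Rabs_def2 in HLa, HLb, Hfab'.
  assert (Hdiff : INR (pair_count x b0 N) / INR N - INR (pair_count x a0 N) / INR N >= eps).
  { replace (INR (pair_count x b0 N) / INR N - INR (pair_count x a0 N) / INR N)
      with ((INR (pair_count x b0 N) - INR (pair_count x a0 N)) / INR N) by (field; lra).
    apply Rle_ge. apply (Rmult_le_reg_r (INR N)); auto. unfold Rdiv.
    rewrite Rmult_assoc, Rinv_l, Rmult_1_r by lra. lra. }
  lra.
Qed.
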